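(* Let $w\in\mathcal{W}^o_n$ and let $(O,E)\to(O',E')$ be one application of the step $(\psi)$ during the computation of $\Psi(w)$. Then $(O,E)$ is obtained from $(O',E')$ by applying one step $(\omega)$.
   Context: Fix a finite totally ordered alphabet $A$. Words are finite sequences over $A$; $-$ is the empty word. $<$ is lexicographic order (a proper prefix is smaller than the word); $\infty$ is a formal symbol with $w<\infty$ for all words $w$. A Lyndon word is a nonempty word strictly smaller than each of its proper nonempty suffixes. Every word has a unique Lyndon factorization $w=\ell_1\cdots\ell_m$ into Lyndon words with $\ell_1\ge\dots\ge\ell_m$, written $\ell_1|\cdots|\ell_m$. Odd/even refer to lengths. For a Lyndon word $\ell$ with $|\ell|\ge2$, its standard factorization is $\ell=rs$ with $s$ the longest proper suffix of $\ell$ that is Lyndon (equivalently the smallest proper nonempty suffix). $\mathcal{W}^o_n$: words of length $n$ whose Lyndon factors are all odd and pairwise distinct. Step $(\psi)$ on a pair of words $(O,E)$ with $|O|\ge2$ (as used in computing $\Psi(w)$, which starts from $(w,-)$ and iterates $(\psi)$ while $|O|\ge2$): let $O=o_1|\cdots|o_m$ (with $o_{m-1}=\infty$ if $m=1$); $o_m$ is splittable if $|o_m|\ge2$ and its standard factorization $o_m=rs$ satisfies $s<o_{m-1}$. Update to: (S) $(o_1\cdots o_{m-1}r,\ sE)$ if splittable and $r$ odd; (P) $(o_1\cdots o_{m-1}s,\ rE)$ if splittable and $r$ even; (F) $(o_1\cdots o_{m-2},\ o_mo_{m-1}E)$ if not splittable. Iterated standard factorization (ISF) of a Lyndon word $\ell$,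 $|\ell|\ge2$, with respect to $u$ (a word or $\infty$): the unique factorization $\ell=r_js_js_{j-1}\cdots s_1$, $j\ge1$, such that (a) for every $i\in[j]$, $s_i$ is the smallest proper nonempty suffix of $r_js_j\cdots s_i$; (b) for $i\in[j-1]$, $s_i$ is even and $s_i<u$; (c) $s_j$ is odd or $u\le s_j$. Step $(\omega)$ on a pair $(O',E')$ with $E'$ nonempty: let $O'=o'_1|\cdots|o'_h$ and $E'=e'_1|\cdots|e'_k$ be Lyndon factorizations (with $o'_h=\infty$ if $O'$ is empty). If $o'_h<e'_1$, update to (S') $(O'e'_1,\ e'_2\cdots e'_k)$. Otherwise let $e'_1=r_js_js_{j-1}\cdots s_1$ be the ISF of $e'_1$ with respect to $o'_h$ and update to (P') $(o'_1\cdots o'_{h-1}r_js_jo'_h,\ s_{j-1}\cdots s_1e'_2\cdots e'_k)$ if $o'_h\le s_j$, or to (F') $(O's_jr_j,\ s_{j-1}\cdots s_1e'_2\cdots e'_k)$ if $s_j<o'_h$. *)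

(* Defs.v *)
From HB Require Import structures.
From mathcomp Require Import all_boot all_order.
Set Implicit Arguments. Unset Strict Implicit. Unset Printing Implicit Defensive.
Import Order.TTheory.

Section Words.
Variables (d : Order.disp_t) (T : finOrderType d).
Notation word := (seq T).

Fixpoint lexlt (u v : word) : bool :=
  match u, v with
  | [::], [::] => false
  | [::], _ :: _ => true
  | _ :: _, [::] => false
  | a :: u', b :: v' => (a < b)%O || ((a == b) && lexlt u' v')
  end.
Definition lexle (u v : word) : bool := (u == v) || lexlt u v.

(* words extended by infinity: None = oo, with w < oo for all words w *)
Definition ltinf (u v : option word) : bool :=
  match u, v with
  | Some a, Some b => lexlt a b
  | Some _, None => true
  | None, _ => false
  end.
Definition leinf (u v : option word) : bool := (u == v) || ltinf u v.

Definition psuffixes (w : word) : seq word :=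
  [seq drop i w | i <- iota 1 (size w).-1].

Definition lyndon (w : word) : bool :=
  (w != [::]) && all (fun s => lexlt w s) (psuffixes w).

(* all factorizations of w into nonempty pieces *)
Fixpoint splits (w : word) : seq (seq word) :=
  match w with
  | [::] => [:: [::]]
  | a :: w' =>
      flatten [seq (if fs is f :: fs' then [:: [:: a] :: fs; (a :: f) :: fs']
                    else [:: [:: [:: a]]]) | fs <- splits w']
  end.

Definition is_lfact (w : word) (fs : seq word) : bool :=
  [&& flatten fs == w, all lyndon fs & sorted (fun x y => lexle y x) fs].

(* THE Lyndon factorization (the first factorization of w satisfying
   is_lfact; it exists and is unique) *)
Definition lfact (w : word) : seq word :=
  nth [::] [seq fs <- splits w | is_lfact w fs] 0.

Definition std_idx (l : word) : nat :=
  (find (fun i => lyndon (drop i l)) (iota 1 (size l).-1)).+1.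
Definition std_r (l : word) : word := take (std_idx l) l.
Definition std_s (l : word) : word := drop (std_idx l) l.

(* step (psi), applied when size O >= 2 *)
Definition psi_step (p : word * word) : word * word :=
  let (O, E) := p in
  let fs := lfact O in
  let m := size fs in
  let om := last [::] fs in
  let om1 : option word := if 2 <= m then Some (nth [::] fs (m - 2)) else None in
  let r := std_r om in
  let s := std_s om in
  let pre := flatten (take m.-1 fs) in
  if (2 <= size om) && ltinf (Some s) om1 then
    (if odd (size r) then (pre ++ r, s ++ E) else (pre ++ s, r ++ E))
  else (flatten (take (m - 2) fs), om ++ nth [::] fs (m - 2) ++ E).

Inductive psi_reach (w : word) : word * word -> Prop :=
  | psi_reach0 : psi_reach w (w, [::])
  | psi_reachS p : psi_reach w p -> 1 < size p.1 -> psi_reach w (psi_step p).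

Definition smallest_psuffix (s x : word) : bool :=
  (s \in psuffixes x) && all (lexle s) (psuffixes x).

(* pcs = r_j :: [:: s_j; ...; s_1] is the ISF of l w.r.t. u *)
Definition is_isf (l : word) (u : option word) (pcs : seq word) : bool :=
  match pcs with
  | r :: ((sj :: _) as ss) =>
      [&& flatten pcs == l,
          all (fun k => smallest_psuffix (nth [::] ss k)
                          (flatten (r :: take k.+1 ss))) (iota 0 (size ss)),
          all (fun s => ~~ odd (size s) && ltinf (Some s) u) (behead ss)
        & odd (size sj) || leinf u (Some sj)]
  | _ => false
  end.

Definition isf (l : word) (u : option word) : seq word :=
  nth [::] [seq pcs <- splits l | is_isf l u pcs] 0.

(* step (omega), applied when E' is nonempty *)
Definition omega_step (p : word * word) : word * word :=
  let (O', E') := p in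
  let ofs := lfact O' in
  let efs := lfact E' in
  let oh : option word := if ofs is [::] then None else Some (last [::] ofs) in
  let e1 := head [::] efs in
  let erest := flatten (behead efs) in
  if ltinf oh (Some e1) then (O' ++ e1, erest)
  else
    let pcs := isf e1 oh in
    let rj := head [::] pcs in
    let ss := behead pcs in
    let sj := head [::] ss in
    let E'' := flatten (behead ss) ++ erest in
    if leinf oh (Some sj) then
      (flatten (belast [::] ofs) ++ rj ++ sj ++ last [::] ofs, E'')
    else (O' ++ sj ++ rj, E'').

Definition Wo (n : nat) (w : word) : bool :=
  [&& size w == n, all (fun l => odd (size l)) (lfact w) & uniq (lfact w)].

End Words.

(* Main.v *)
Require Import Defs.
From mathcomp Require Import all_boot all_order zify.
Set Implicit Arguments. Unset Strict Implicit. Unset Printing Implicit Defensive.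
Import Order.TTheory.

Section Lex.
Variables (d : Order.disp_t) (T : finOrderType d).
Notation word := (seq T).
Implicit Types u v w x y z p : word.

Lemma lexlt_nil_r u : lexlt u [::] = false. Proof. by case: u. Qed.
Lemma lexlt_nil_l v : lexlt [::] v = (v != [::]). Proof. by case: v. Qed.
Lemma lexlt_cons a b u v : lexlt (a :: u) (b :: v) = (a < b)%O || ((a == b) && lexlt u v).
Proof. by []. Qed.

Lemma lexlt_irr u : lexlt u u = false.
Proof. by elim: u => //= a u ->; rewrite ltxx eqxx. Qed.

Lemma lexlt_trans v u w : lexlt u v -> lexlt v w -> lexlt u w.
Proof.
elim: u v w => [|a u IH] [|b v] [|c w] //=.
case/orP=> [ab|/andP[/eqP<- uv]]; case/orP=> [bc|/andP[/eqP<- vw]].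
- by rewrite (lt_trans ab bc).
- by rewrite ab.
- by rewrite bc.
- by rewrite eqxx (IH _ _ uv vw) orbT.
Qed.

Lemma lexlt_asym u v : lexlt u v -> lexlt v u -> False.
Proof. by move=> h1 h2; have := lexlt_trans h1 h2; rewrite lexlt_irr. Qed.

Lemma lexlt_total u v : [\/ lexlt u v, u = v | lexlt v u].
Proof.
elim: u v => [|a u IH] [|b v] /=; try by [constructor 2|constructor 1|constructor 3].
case: (ltgtP a b) => [ab|ba|<-]; first by constructor 1.
- by constructor 3.
rewrite ?eqxx /= ?ltxx /=; case: (IH v) => [h|->|h]; by [constructor 1|constructor 2|constructor 3].
Qed.

Lemma lexlt_catl p u v : lexlt (p ++ u) (p ++ v) = lexlt u v.
Proof. by elim: p => //= a p ->; rewrite ltxx eqxx. Qed.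

Lemma lexlt_prefix u w : w != [::] -> lexlt u (u ++ w).
Proof. by move=> hw; rewrite -{1}(cats0 u) lexlt_catl lexlt_nil_l. Qed.

Lemma lexlt_cases u v : lexlt u v ->
  (exists2 w, w != [::] & v = u ++ w) \/ (forall x y, lexlt (u ++ x) (v ++ y)).
Proof.
elim: u v => [|a u IH] [|b v] //=.
- by move=> _; left; exists (b :: v).
case/orP=> [ab|/andP[/eqP<- uv]].
- by right=> x y; rewrite /= ab.
case: (IH _ uv) => [[w hw ->]|h].
- by left; exists w.
- by right=> x y; rewrite /= eqxx ltxx h.
Qed.

Lemma lexlt_catr u v z : lexlt u v -> lexlt u (v ++ z).
Proof.
case/lexlt_cases=> [[w hw ->]|h].
- by rewrite -catA lexlt_prefix // -size_eq0 size_cat addn_eq0 size_eq0 (negbTE hw).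
- by rewrite -(cats0 u) h.
Qed.

Lemma lexlt_short u v x y : lexlt u v -> size v <= size u -> lexlt (u ++ x) (v ++ y).
Proof.
case/lexlt_cases=> [[w hw ->]|h] //.
by rewrite size_cat -{2}(addn0 (size u)) leq_add2l leqn0 size_eq0 (negbTE hw).
Qed.



Lemma lexleE u v : lexle u v = (u == v) || lexlt u v. Proof. by []. Qed.
Lemma lexle_refl u : lexle u u. Proof. by rewrite /lexle eqxx. Qed.
Lemma lexltW u v : lexlt u v -> lexle u v. Proof. by rewrite /lexle => ->; rewrite orbT. Qed.

Lemma lexle_lt_trans v u w : lexle u v -> lexlt v w -> lexlt u w.
Proof. by case/orP=> [/eqP->//|h1 h2]; apply: lexlt_trans h1 h2. Qed.
Lemma lexlt_le_trans v u w : lexlt u v -> lexle v w -> lexlt u w.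
Proof. by move=> h1; case/orP=> [/eqP<-//|h2]; apply: lexlt_trans h1 h2. Qed.
Lemma lexle_trans v u w : lexle u v -> lexle v w -> lexle u w.
Proof.
move=> h1; case/orP=> [/eqP<-//|h2]; apply: lexltW; exact: lexle_lt_trans h1 h2.
Qed.
Lemma lexleNgt u v : lexle u v = ~~ lexlt v u.
Proof.
rewrite /lexle; case: (lexlt_total u v) => [h|->|h].
- by rewrite h orbT; apply/esym/negP => /(lexlt_asym h).
- by rewrite eqxx lexlt_irr.
- rewrite h /=; apply/negbTE; rewrite negb_or; apply/andP; split.
  + by apply/eqP => e; move: h; rewrite e lexlt_irr.
  + by apply/negP => /(lexlt_asym h).
Qed.
Lemma lexltNge u v : lexlt u v = ~~ lexle v u.
Proof. by rewrite lexleNgt negbK. Qed.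
Lemma lexle_anti u v : lexle u v -> lexle v u -> u = v.
Proof. by case/orP=> [/eqP//|h]; rewrite lexleNgt h. Qed.
Lemma lexle_prefix u w : lexle u (u ++ w).
Proof. by case: w => [|a w]; [rewrite cats0 lexle_refl|apply/lexltW/lexlt_prefix]. Qed.
Lemma lexle_catr u v z : lexle u v -> lexle u (v ++ z).
Proof. by case/orP=> [/eqP->|h]; [apply: lexle_prefix|apply/lexltW/lexlt_catr]. Qed.

End Lex.

Section Lyn.
Variables (d : Order.disp_t) (T : finOrderType d).
Notation word := (seq T).
Implicit Types u v w x y z p : word.

Lemma psufI x y : y \in psuffixes x -> exists2 i, 0 < i < size x & y = drop i x.
Proof.
case/mapP=> i; rewrite mem_iota => /andP[h1 h2] ->; exists i => //.
move: h1 h2; case: (size x) => [|n] /=; lia.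
Qed.

Lemma psufE x i : 0 < i < size x -> drop i x \in psuffixes x.
Proof.
case/andP=> h1 h2; apply/mapP; exists i => //; rewrite mem_iota h1 /=.
move: h1 h2; case: (size x) => [|n] /=; lia.
Qed.

Lemma psufP x y : y \in psuffixes x -> exists p, [/\ p != [::], y != [::] & x = p ++ y].
Proof.
case/psufI=> i /andP[h1 h2] ->; exists (take i x); split.
- by rewrite -size_eq0 size_take h2 -lt0n.
- by rewrite -size_eq0 size_drop subn_eq0 -ltnNge.
- by rewrite cat_take_drop.
Qed.

Lemma psuf_cat p y : p != [::] -> y != [::] -> y \in psuffixes (p ++ y).
Proof.
move=> hp hy; rewrite -{1}(drop_size_cat y (erefl (size p))).
apply: psufE; rewrite lt0n size_eq0 hp size_cat /= -{1}(addn0 (size p)) ltn_add2l.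
by rewrite lt0n size_eq0.
Qed.

Lemma psuf_catl u v y : y \in psuffixes u -> y ++ v \in psuffixes (u ++ v).
Proof.
case/psufI=> i /andP[h1 h2] ->.
have -> : drop i u ++ v = drop i (u ++ v) by rewrite drop_cat h2.
apply: psufE.
by rewrite h1 size_cat (leq_trans h2) // leq_addr.
Qed.

Lemma psuf_catr u v y : y \in psuffixes v -> y \in psuffixes (u ++ v).
Proof.
case/psufI=> i /andP[h1 h2] ->.
have -> : drop i v = drop (i + size u) (u ++ v) by rewrite -drop_drop drop_size_cat.
apply: psufE; rewrite size_cat; lia.
Qed.

Lemma psuf_catP u v y : u != [::] -> y \in psuffixes (u ++ v) ->
  [\/ exists2 y', y' \in psuffixes u & y = y' ++ v, y = v | y \in psuffixes v].
Proof.
move=> hu /psufI [i /andP[h1 h2] ->]; rewrite drop_cat.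
case: ltnP => hi.
- by constructor 1; exists (drop i u) => //; apply: psufE; rewrite h1.
case: (ltngtP i (size u)) hi => // [hgt|->] _.
- constructor 3; apply: psufE; rewrite subn_gt0 hgt /=.
  by rewrite -(ltn_add2l (size u)) subnKC ?(ltnW hgt) // -size_cat.
- by rewrite subnn drop0; constructor 2.
Qed.

Lemma psuf_size x y : y \in psuffixes x -> size y < size x.
Proof.
case/psufP=> p [hp _ ->]; rewrite size_cat -{1}(add0n (size y)) ltn_add2r lt0n.
by rewrite size_eq0.
Qed.

Lemma psuf_neq0 x y : y \in psuffixes x -> y != [::].
Proof. by case/psufP=> p []. Qed.

Lemma psuf_trans x y z : y \in psuffixes x -> z \in psuffixes y -> z \in psuffixes x.
Proof.
case/psufP=> p [hp _ ->] /psufP [q [hq hz ->]]; rewrite catA psuf_cat //.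
by rewrite -size_eq0 size_cat addn_eq0 negb_and size_eq0 hp.
Qed.

Lemma lyndon_neq0 x : lyndon x -> x != [::]. Proof. by case/andP. Qed.
Lemma lyndonP x y : lyndon x -> y \in psuffixes x -> lexlt x y.
Proof. by case/andP=> _ /allP; apply. Qed.
Lemma lyndonI x : x != [::] -> (forall y, y \in psuffixes x -> lexlt x y) -> lyndon x.
Proof. by move=> h1 h2; apply/andP; split=> //; apply/allP. Qed.

Lemma lyndon1 (a : T) : lyndon [:: a]. Proof. by []. Qed.

Lemma lexlt_cat_lyn u v : u != [::] -> lexlt u v -> lyndon v -> lexlt (u ++ v) v.
Proof.
move=> hu; case/lexlt_cases=> [[w hw ->] hv|h _].
- by rewrite lexlt_catl; apply: lyndonP hv _; apply: psuf_cat.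
- by rewrite -{2}(cats0 v) h.
Qed.


End Lyn.

Section Lyn2.
Variables (d : Order.disp_t) (T : finOrderType d).
Notation word := (seq T).
Implicit Types u v w x y z p : word.

Lemma lyndon_cat u v : lyndon u -> lyndon v -> lexlt u v -> lyndon (u ++ v).
Proof.
move=> hu hv huv; have u0 := lyndon_neq0 hu.
apply: lyndonI => [|y].
- by rewrite -size_eq0 size_cat addn_eq0 negb_and size_eq0 u0.
case/(psuf_catP u0) => [[y' hy' ->]|->|hy].
- apply: lexlt_short; first exact: lyndonP hu hy'.
  exact: ltnW (psuf_size hy').
- exact: lexlt_cat_lyn.
- exact: lexlt_trans (lexlt_cat_lyn u0 huv hv) (lyndonP hv hy).
Qed.

Lemma minsuf_cat u v : u != [::] -> lyndon v -> all (lexle v) (psuffixes u) ->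
  smallest_psuffix v (u ++ v).
Proof.
move=> u0 hv /allP hall; apply/andP; split; first exact: psuf_cat (lyndon_neq0 hv).
apply/allP => y /(psuf_catP u0) [[y' hy' ->]|->|hy].
- exact: lexle_catr (hall _ hy').
- exact: lexle_refl.
- exact: lexltW (lyndonP hv hy).
Qed.

Lemma minsuf_uniq a b x : smallest_psuffix a x -> smallest_psuffix b x -> a = b.
Proof.
case/andP=> ha /allP Ha /andP[hb /allP Hb]; apply: lexle_anti; [exact: Ha|exact: Hb].
Qed.

Lemma min_exists (s : seq word) : s != [::] -> exists2 z, z \in s & all (lexle z) s.
Proof.
elim: s => // a [|b s] IH _.
- by exists a; rewrite ?inE ?eqxx //= lexle_refl.
case: IH => // z hz hall.
case: (boolP (lexle a z)) => haz.
- exists a; first by rewrite inE eqxx.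
  apply/allP => y; rewrite inE => /orP[/eqP->|hy]; first exact: lexle_refl.
  by apply: lexle_trans haz _; exact: (allP hall).
- exists z; first by rewrite inE hz orbT.
  apply/allP => y; rewrite inE => /orP[/eqP->|hy]; last exact: (allP hall).
  by apply: lexltW; rewrite lexltNge.
Qed.

Lemma minsuf_exists x : 1 < size x -> exists z, smallest_psuffix z x.
Proof.
move=> hx; have : psuffixes x != [::].
  by rewrite -size_eq0 size_map size_iota; case: (size x) hx => [|[|n]].
by case/min_exists => z h1 h2; exists z; apply/andP.
Qed.

Lemma minsuf_lyndon z x : smallest_psuffix z x -> lyndon z.
Proof.
case/andP=> hz /allP hall; apply: lyndonI; first exact: psuf_neq0 hz.
move=> y hy; have := hall _ (psuf_trans hz hy); case/orP => [/eqP e|//].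
by move: (psuf_size hy); rewrite e ltnn.
Qed.

Lemma find_eq (P : pred nat) (s : seq nat) j :
  j < size s -> P (nth 0 s j) -> (forall k, k < j -> ~~ P (nth 0 s k)) -> find P s = j.
Proof.
move=> hj hP hb; have hs : has P s by apply/(has_nthP 0); exists j.
have := nth_find 0 hs.
case: (ltngtP (find P s) j) => [lt h|gt _|//].
- by move: (hb _ lt); rewrite h.
- by move: (before_find 0 gt); rewrite hP.
Qed.

Lemma std_minsuf (l : word) : lyndon l -> 1 < size l -> smallest_psuffix (std_s l) l.
Proof.
move=> hl hsz; case: (minsuf_exists hsz) => z hz.
have [p [p0 z0 lE]] := psufP (proj1 (andP hz)).
suff e : std_idx l = size p.
  by rewrite /std_s e; have -> : drop (size p) l = z by rewrite lE drop_size_cat.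
have hp : 0 < size p by rewrite lt0n size_eq0.
have hpl : size p < size l.
  by rewrite lE size_cat -{1}(addn0 (size p)) ltn_add2l lt0n size_eq0.
rewrite /std_idx (@find_eq _ _ (size p).-1) ?prednK //.
- by rewrite size_iota; case: (size p) hp hpl => // k _; case: (size l) => //= n; rewrite ltnS.
- rewrite nth_iota; last by case: (size p) hp hpl => // k _; case: (size l) => //= n; rewrite ltnS.
  rewrite add1n prednK // lE drop_size_cat //; exact: minsuf_lyndon hz.
- move=> k hk; rewrite nth_iota; last first.
    by apply: leq_trans hk _; case: (size p) hp hpl => // k' _; case: (size l) => //= n; rewrite ltnS => /ltnW.
  apply/negP => hly.
  have hk1 : k.+1 < size p by move: hk; case: (size p) hp.
  have hin : z \in psuffixes (drop (1 + k) l).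
    rewrite lE drop_cat add1n hk1.
    apply: psuf_cat => //; rewrite -size_eq0 size_drop subn_eq0 -ltnNge //.
  have h1 := lyndonP hly hin.
  have hin2 : drop (1 + k) l \in psuffixes l.
    by apply: psufE; rewrite add1n ltn0Sn /=; exact: ltn_trans hk1 hpl.
  have := (allP (proj2 (andP hz))) _ hin2; rewrite lexleNgt h1.
  by [].
Qed.

End Lyn2.

Section Std.
Variables (d : Order.disp_t) (T : finOrderType d).
Notation word := (seq T).
Implicit Types u v w x y z p l : word.

Lemma std_cat l : std_r l ++ std_s l = l. Proof. exact: cat_take_drop. Qed.

Lemma std_r_neq0 l : lyndon l -> 1 < size l -> std_r l != [::].
Proof.
move=> hl hs; apply/negP => /eqP r0; have := std_minsuf hl hs.
case/andP => /psuf_size; rewrite -{2}(std_cat l) r0 /= ltnn //.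
Qed.

Lemma std_s_lyndon l : lyndon l -> 1 < size l -> lyndon (std_s l).
Proof. by move=> hl hs; apply: minsuf_lyndon (std_minsuf hl hs). Qed.

Lemma std_r_lyndon l : lyndon l -> 1 < size l -> lyndon (std_r l).
Proof.
move=> hl hs; have hm := std_minsuf hl hs; have r0 := std_r_neq0 hl hs.
set r := std_r l in r0 *; set s := std_s l in hm *.
have lE : l = r ++ s by rewrite std_cat.
apply: lyndonI => // y hy.
have h1 : lexlt l (y ++ s) by apply: lyndonP hl _; rewrite lE; apply: psuf_catl.
case: (lexlt_total r y) => [//|e|hyr].
- by move: (psuf_size hy); rewrite e ltnn.
case: (lexlt_cases hyr) => [[w' w0 rE]|hstr].
- move: h1; rewrite lE rE -catA lexlt_catl => h1.
  have hin : w' ++ s \in psuffixes l.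
    rewrite lE rE -catA; apply: psuf_cat; first exact: psuf_neq0 hy.
    by rewrite -size_eq0 size_cat addn_eq0 negb_and size_eq0 w0.
  move: hm => /andP[_ /allP /(_ _ hin)].
  by rewrite lexleNgt h1.
- by move: h1; rewrite lE => h1; case: (lexlt_asym h1 (hstr s s)).
Qed.

Lemma std_hall l : lyndon l -> 1 < size (std_r l) ->
  all (lexle (std_s l)) (psuffixes (std_r l)).
Proof.
move=> hl hr.
have hs : 1 < size l.
  by rewrite -(std_cat l) size_cat; apply: leq_trans hr _; apply: leq_addr.
have hm := std_minsuf hl hs; have sl := std_s_lyndon hl hs.
case: (minsuf_exists hr) => s1 hs1; have s1l := minsuf_lyndon hs1.
have hle : lexle (std_s l) s1.
  rewrite lexleNgt; apply/negP => h.
  have hin : s1 ++ std_s l \in psuffixes l.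
    by rewrite -{2}(std_cat l); apply: psuf_catl; case/andP: hs1.
  have := (allP (proj2 (andP hm))) _ hin.
  by rewrite lexleNgt (lexlt_cat_lyn (lyndon_neq0 s1l) h sl).
apply/allP => y hy; apply: lexle_trans hle _.
exact: (allP (proj2 (andP hs1))).
Qed.

End Std.

Section Fact.
Variables (d : Order.disp_t) (T : finOrderType d).
Notation word := (seq T).
Implicit Types u v w x y z p l : word.
Implicit Types fs gs es : seq word.

Definition lge (x y : word) := lexle y x.

Lemma lge_trans : transitive lge.
Proof. by move=> y x z h1 h2; apply: lexle_trans h2 h1. Qed.

Lemma path_lgeE x fs : path lge x fs = all (lge x) fs && sorted lge fs.
Proof. exact: (path_sortedE lge_trans). Qed.

Lemma splits_complete w fs : flatten fs = w -> all (fun f => f != [::]) fs -> fs \in splits w.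
Proof.
elim: w fs => [|a w IH] [|f fs] //=.
- by case: f.
case: f => [|b f] //= [<- ew] hall; apply/flatten_mapP.
case: f ew => [|c f] /= ew.
- exists fs; first exact: IH.
  by case: (fs) => [|g gs]; rewrite !inE eqxx.
- exists ((c :: f) :: fs); first by apply: IH => //=; rewrite hall.
  by rewrite !inE eqxx orbT.
Qed.


End Fact.
Arguments lge {d T} x y.

Section Fact2.
Variables (d : Order.disp_t) (T : finOrderType d).
Notation word := (seq T).
Implicit Types u v w x y z p l : word.
Implicit Types fs gs es : seq word.

Lemma pref_small f gs n : all (fun g => lexle g f) gs -> 0 < n <= size (flatten gs) ->
  exists2 i, i < n & lexle (drop i (take n (flatten gs))) f.
Proof.
elim: gs n => [|g gs IH] n /=; first by case: n.
case/andP=> hg hall /andP[n0 hn]; rewrite take_cat.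
case: (ltngtP n (size g)) => hng.
- exists 0 => //; rewrite drop0; apply: lexle_trans hg.
  by rewrite -{2}(cat_take_drop n g) lexle_prefix.
- case: (IH (n - size g)) => //.
    rewrite subn_gt0 hng /= leq_subLR -size_cat //.
  move=> i hi hle; exists (size g + i); first by rewrite -ltn_subRL.
  by rewrite drop_cat ltnNge leq_addr /= addKn.
- by exists 0 => //; rewrite hng subnn take0 cats0 drop0.
Qed.

Lemma lyn_prefix_max w f fs p q : is_lfact w (f :: fs) -> w = p ++ q -> lyndon p ->
  size p <= size f.
Proof.
case/and3P=> /eqP wE /andP[hf hfs] hs hw hp; rewrite leqNgt; apply/negP => hlt.
have hall : all (fun g => lexle g f) fs by move: hs; rewrite /= path_lgeE => /andP[].
have pE : p = f ++ take (size p - size f) (flatten fs).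
  have e : take (size p) w = p by rewrite hw take_size_cat.
  by rewrite -{1}e -wE /= take_cat ltnNge (ltnW hlt).
have hn : 0 < size p - size f <= size (flatten fs).
  rewrite subn_gt0 hlt /= leq_subLR -size_cat.
  have : size w = size (p ++ q) by rewrite hw.
  by rewrite -wE /= size_cat => ->; rewrite size_cat leq_addr.
case: (pref_small hall hn) => i hi hle.
set t := take _ _ in pE hle.
have ht : size t = size p - size f by rewrite size_take; case/andP: hn => _; rewrite leq_eqVlt => /orP[/eqP->|->]; rewrite ?ltnn.
have hin : drop i t \in psuffixes p.
  rewrite pE -{2}(cat_take_drop i t) catA; apply: psuf_cat.
  - by rewrite -size_eq0 size_cat addn_eq0 negb_and size_eq0 (lyndon_neq0 hf).
  - by rewrite -size_eq0 size_drop ht subn_eq0 -ltnNge.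
have h1 := lyndonP hp hin.
have h2 : lexlt f p.
  rewrite pE lexlt_prefix // -size_eq0 ht subn_eq0 -ltnNge //.
by move: (lexlt_trans h2 h1); rewrite lexltNge hle.
Qed.

Lemma lfact_uniq w fs gs : is_lfact w fs -> is_lfact w gs -> fs = gs.
Proof.
elim: fs w gs => [|f fs IH] w [|g gs] //.
- case/and3P=> /eqP <- _ _ /and3P[/eqP /= e /andP[hg _] _].
  by case: g hg e.
- case/and3P=> [/eqP /= e /andP[hf _] _] /and3P[/eqP /= e2 _ _].
  by rewrite -e2 in e; case: f hf e.
move=> hF hG.
move: (hF) (hG) => /and3P[/eqP /= eF /andP[hf hfs] sF] /and3P[/eqP /= eG /andP[hg hgs] sG].
have h1 := lyn_prefix_max hF (esym eG) hg.
have h2 := lyn_prefix_max hG (esym eF) hf.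
have es : size f = size g by apply/eqP; rewrite eqn_leq h1 h2.
have efg : f = g.
  have : take (size f) w = take (size g) w by rewrite es.
  by rewrite -{1}eF -eG !take_size_cat.
subst g; congr (_ :: _); apply: (IH (flatten fs)).
- by rewrite /is_lfact eqxx hfs (path_sorted sF).
- have -> : flatten fs = flatten gs.
    by rewrite -(drop_size_cat (flatten fs) (erefl (size f))) eF -eG drop_size_cat.
  by rewrite /is_lfact eqxx hgs (path_sorted sG).
Qed.



End Fact2.

Section Fact3.
Variables (d : Order.disp_t) (T : finOrderType d).
Notation word := (seq T).
Implicit Types u v w x y z p l : word.
Implicit Types fs gs es : seq word.

Lemma lexle_nil y : lexle [::] y.
Proof. by rewrite /lexle lexlt_nil_l; case: y. Qed.

Lemma lyn_merge p es : lyndon p -> all (@lyndon _ T) es -> sorted lge es ->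
  exists t, [/\ t <= size es,
     lyndon (p ++ flatten (take t es)),
     sorted lge ((p ++ flatten (take t es)) :: drop t es) &
     (all (lexle (head [::] es)) (psuffixes p) ->
        forall k, k < t -> smallest_psuffix (nth [::] es k) (p ++ flatten (take k.+1 es)))].
Proof.
elim: es p => [|e es IH] p hp.
- by move=> _ _; exists 0; rewrite /= cats0.
case/andP=> he hes hs.
have hs' : sorted lge es := path_sorted hs.
case: (boolP (lexle e p)) => hep.
- by exists 0; split => //=; rewrite cats0 // /lge hep.
have hpe : lexlt p e by rewrite lexltNge.
have hp' := lyndon_cat hp he hpe.
case: (IH _ hp' hes hs') => t [ht hl hso hch].
exists t.+1; split => //=; rewrite ?catA //.
move=> H [|k] hk /=.
- by rewrite take0 /= cats0; apply: minsuf_cat => //; exact: lyndon_neq0.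
rewrite catA; apply: hch => //.
have hm := minsuf_cat (lyndon_neq0 hp) he H.
apply/allP => y hy; apply: lexle_trans (allP (proj2 (andP hm)) _ hy).
case: (es) hs => [|e' es'] /=; first by rewrite lexle_nil.
by case/andP.
Qed.

Lemma lfact_exists w : exists fs, is_lfact w fs.
Proof.
elim: w => [|a w [fs /and3P[/eqP e hl hs]]]; first by exists [::].
case: (lyn_merge (lyndon1 a) hl hs) => // t [_ hx hso _].
exists ((a :: flatten (take t fs)) :: drop t fs).
rewrite /is_lfact /= -flatten_cat cat_take_drop e eqxx /=; rewrite /= in hx hso; rewrite hx hso andbT /=.
by apply/allP => y /mem_drop; move/allP: hl; apply.
Qed.

Lemma nth0_all_eq (A : eqType) (s : seq A) (a b : A) : a \in s -> (forall c, c \in s -> c = a) ->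
  nth b s 0 = a.
Proof. by case: s => //= c s _ H; apply: H; rewrite inE eqxx. Qed.

Lemma lfact_eq w fs : is_lfact w fs -> lfact w = fs.
Proof.
move=> h; apply: nth0_all_eq.
- rewrite mem_filter h /=; apply: splits_complete; first by case/and3P: h => /eqP.
  by case/and3P: h => _ /allP hl _; apply/allP => x /hl /lyndon_neq0.
- by move=> g; rewrite mem_filter => /andP[hg _]; exact: lfact_uniq hg h.
Qed.

Lemma lfact_spec w : is_lfact w (lfact w).
Proof. by case: (lfact_exists w) => fs h; rewrite (lfact_eq h). Qed.


End Fact3.

Section ISF.
Variables (d : Order.disp_t) (T : finOrderType d).
Notation word := (seq T).
Implicit Types u v w x y z p l r s a : word.
Implicit Types fs gs es ss : seq word.
Implicit Types o : option word.

Definition chain r ss := all (fun k => smallest_psuffix (nth [::] ss k)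
                          (flatten (r :: take k.+1 ss))) (iota 0 (size ss)).

Lemma chain_rcons r ss a :
  chain r (rcons ss a) = chain r ss && smallest_psuffix a (flatten (r :: rcons ss a)).
Proof.
rewrite /chain size_rcons -addn1 iotaD all_cat /= add0n andbT.
congr (_ && _).
- apply: eq_in_all => k; rewrite mem_iota add0n => /andP[_ hk].
  rewrite nth_rcons hk -cats1 takel_cat //.
- by rewrite nth_rcons ltnn eqxx take_oversize // size_rcons.
Qed.

Lemma is_isfE l o r ss : is_isf l o (r :: ss) =
  [&& ss != [::], flatten (r :: ss) == l, chain r ss,
      all (fun s => ~~ odd (size s) && ltinf (Some s) o) (behead ss)
    & odd (size (head [::] ss)) || leinf o (Some (head [::] ss))].
Proof. by case: ss. Qed.

Lemma ltinf_leinf a o : ltinf (Some a) o -> leinf o (Some a) -> False.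
Proof.
case: o => [b|] //= hab; rewrite /leinf /= => /orP[/eqP[e]|h].
- by move: hab; rewrite e lexlt_irr.
- exact: lexlt_asym hab h.
Qed.

Lemma isf_rcons_inv l o r ss a : is_isf l o (r :: rcons ss a) ->
  [/\ smallest_psuffix a l, l = flatten (r :: ss) ++ a &
      if ss is [::] then odd (size a) || leinf o (Some a)
      else is_isf (flatten (r :: ss)) o (r :: ss) /\ (~~ odd (size a) && ltinf (Some a) o)].
Proof.
rewrite is_isfE chain_rcons => /and5P[_ /eqP lE /andP[hc hm] hb hh].
have lE' : l = flatten (r :: ss) ++ a by rewrite -lE /= flatten_rcons catA.
split => //; first by rewrite -lE.
clear hm; case: ss lE lE' hc hb hh => [|b ss] // lE lE' hc hb hh.
move: hb; rewrite rcons_cons [behead _]/= all_rcons => /andP[ha hb].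
split => //; rewrite is_isfE eqxx hc hb; exact: hh.
Qed.

Lemma isf_uniq l o (q1 q2 : seq word) : is_isf l o q1 -> is_isf l o q2 -> q1 = q2.
Proof.
case: q1 => [|r1 ss1] //; case: q2 => [|r2 ss2] //.
elim/last_ind: ss1 l ss2 r1 r2 => [|ss1 a1 IH] l ss2 r1 r2 //.
case/lastP: ss2 => [|ss2 a2] //.
move=> /isf_rcons_inv [m1 e1 h1] /isf_rcons_inv [m2 e2 h2].
have ea := minsuf_uniq m1 m2; subst a2.
have e : flatten (r1 :: ss1) = flatten (r2 :: ss2).
  have hs : size (flatten (r1 :: ss1)) = size (flatten (r2 :: ss2)).
    by apply/eqP; rewrite -(eqn_add2r (size a1)) -!size_cat -e1 -e2.
  have : take (size (flatten (r1 :: ss1))) l = take (size (flatten (r2 :: ss2))) l by rewrite hs.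
  by rewrite {1}e1 e2 !take_size_cat.
clear e1 e2 m1 m2; case: ss1 h1 e IH => [|b1 ss1] h1 e IH; case: ss2 h2 e => [|b2 ss2] h2 e.
- by move: e; rewrite /= !cats0 => ->.
- case: h2 => _ /andP[ho hl]; move/orP: h1 => [h|h]; first by rewrite h in ho.
  by case: (ltinf_leinf hl h).
- case: h1 => _ /andP[ho hl]; move/orP: h2 => [h|h]; first by rewrite h in ho.
  by case: (ltinf_leinf hl h).
- case: h1 h2 => [i1 _] [i2 _]; rewrite e in i1.
  by case: (IH _ _ _ _ i1 i2) => -> -> ->.
Qed.

End ISF.

Section ISF2.
Variables (d : Order.disp_t) (T : finOrderType d).
Notation word := (seq T).
Implicit Types u v w x y z p l r s a e : word.
Implicit Types fs gs es ss : seq word.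
Implicit Types o : option word.

Lemma isf_eq l o (q : seq word) : is_isf l o q -> isf l o = q.
Proof.
move=> h; apply: nth0_all_eq; last first.
  by move=> c; rewrite mem_filter => /andP[hc _]; exact: isf_uniq hc h.
rewrite mem_filter h /=.
case: q h => [|r ss] //; rewrite is_isfE => /and5P[ss0 /eqP lE hc _ _].
apply: splits_complete => //=.
have hk : forall k, k < size ss -> smallest_psuffix (nth [::] ss k) (flatten (r :: take k.+1 ss)).
  by move=> k hk; move/allP: hc; apply; rewrite mem_iota.
apply/andP; split.
- clear lE; case: ss ss0 hc hk => [|b ss] // _ _ /(_ 0 (ltn0Sn _)) /andP[/psuf_size].
  rewrite /= take0 /= cats0 size_cat => hs _; apply/negP => /eqP r0.
  by move: hs; rewrite r0 /= ltnn.
- apply/allP => c /(nthP [::]) [k hk2 <-].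
  by case/andP: (hk k hk2) => /psuf_neq0.
Qed.

Lemma isf_base r s o : smallest_psuffix s (r ++ s) -> odd (size s) || leinf o (Some s) ->
  is_isf (r ++ s) o [:: r; s].
Proof.
move=> hm hh; rewrite is_isfE /= cats0 eqxx hh andbT /chain /=.
by rewrite cats0 hm.
Qed.


Lemma isf_build x o r ss e : is_isf x o (r :: ss) -> smallest_psuffix e (x ++ e) ->
  ~~ odd (size e) && ltinf (Some e) o -> is_isf (x ++ e) o (r :: rcons ss e).
Proof.
rewrite !is_isfE => /and5P[ss0 /eqP xE hc hb hh] hm he.
have fE : flatten (r :: rcons ss e) = x ++ e by rewrite -xE /= flatten_rcons catA.
rewrite fE eqxx chain_rcons hc fE hm /=.
case: ss ss0 xE hc hb hh fE => [|b ss] // _ _ _ hb hh _.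
by rewrite rcons_cons /= all_rcons he hb.
Qed.

End ISF2.

Section Helpers.
Variables (d : Order.disp_t) (T : finOrderType d).
Notation word := (seq T).
Implicit Types u v w x y z p l r s a e b : word.
Implicit Types fs gs es ss : seq word.
Implicit Types o : option word.

Definition lgt (x y : word) := lexlt y x.
Definition lastopt fs : option word := if fs is [::] then None else Some (last [::] fs).

Lemma sorted_rcons (e : rel word) fs y :
  sorted e (rcons fs y) = sorted e fs && (if fs is [::] then true else e (last [::] fs) y).
Proof. by case: fs => [|x fs] //=; rewrite rcons_path. Qed.

Lemma sorted_head_le es y : sorted lge es -> y \in es -> lexle y (head [::] es).
Proof.
case: es => [|e es] //= hs; rewrite inE => /orP[/eqP->|hy]; first exact: lexle_refl.
by move: hs; rewrite path_lgeE => /andP[/allP /(_ _ hy)].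
Qed.

Lemma even_flatten es : all (fun e => ~~ odd (size e)) es -> ~~ odd (size (flatten es)).
Proof. by elim: es => //= e es IH /andP[h1 h2]; rewrite size_cat oddD (negbTE h1) IH. Qed.

Lemma psuf_small x : size x <= 1 -> psuffixes x = [::].
Proof. by case: x => [|a [|b x]]. Qed.

Lemma lexle_psuf_all b x : (1 < size x -> all (lexle b) (psuffixes x)) -> all (lexle b) (psuffixes x).
Proof. by case: (ltnP 1 (size x)) => h H; [apply: H|rewrite psuf_small]. Qed.

Lemma merge_lt p es t b : lyndon (p ++ flatten (take t es)) -> sorted lge es -> t <= size es ->
  (forall k, k < t -> smallest_psuffix (nth [::] es k) (p ++ flatten (take k.+1 es))) ->
  lexlt p b -> (es != [::] -> lexlt (head [::] es) b) ->
  lexlt (p ++ flatten (take t es)) b.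
Proof.
case: t => [|k] hx hs ht hch hp hes; first by rewrite take0 cats0.
have hk : k < size es by exact: ht.
have /andP[hin _] := hch k (ltnSn k).
apply: lexlt_trans (lyndonP hx hin) _.
apply: lexle_lt_trans (sorted_head_le hs (mem_nth _ hk)) (hes _).
by case: (es) hk.
Qed.

Lemma lfact_nil : lfact ([::] : word) = ([::] : seq word).
Proof. exact: (@lfact_eq _ T). Qed.

Lemma lfact_neq0 (O : word) : O != [::] -> lfact O != [::].
Proof.
move=> h; apply/negP => /eqP e; move: (lfact_spec O); rewrite e.
by case/and3P => /eqP /= e'; rewrite -e' eqxx in h.
Qed.

End Helpers.
Arguments lgt {d T} x y.

Section Steps.
Variables (d : Order.disp_t) (T : finOrderType d).
Notation word := (seq T).
Implicit Types u v w x y z p l r s a e b O E : word.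
Implicit Types fs gs es ss : seq word.
Implicit Types o : option word.

Lemma lastopt_rcons fs x : lastopt (rcons fs x) = Some x.
Proof. by case: fs => [|y fs] //=; rewrite last_rcons. Qed.

Lemma take_rcons_size fs x : take (size fs) (rcons fs x) = fs.
Proof. by rewrite -cats1 take_size_cat. Qed.

Lemma nth_rcons_size fs x : nth [::] (rcons fs x) (size fs) = x.
Proof. by rewrite nth_rcons ltnn eqxx. Qed.

Lemma psi_stepE O E fs0 om : lfact O = rcons fs0 om -> 1 < size O ->
  psi_step (O, E) =
   if (1 < size om) && ltinf (Some (std_s om)) (lastopt fs0) then
     (if odd (size (std_r om)) then (flatten fs0 ++ std_r om, std_s om ++ E)
      else (flatten fs0 ++ std_s om, std_r om ++ E))
   else (flatten (take (size fs0).-1 fs0), om ++ last [::] fs0 ++ E).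
Proof.
move=> hf hO; rewrite /psi_step hf size_rcons last_rcons /=.
case/lastP: fs0 hf => [|fs1 o1] hf.
- have hs : size om = size O.
    by move: (lfact_spec O); rewrite hf => /and3P[/eqP <- _ _]; rewrite /= cats0.
  by rewrite /= hs hO /=.
rewrite size_rcons ltnS lt0n /= lastopt_rcons.
have e0 : (size fs1).+2 - 2 = size fs1 by rewrite subSS subSS subn0.
rewrite e0.
have e1 : nth [::] (rcons (rcons fs1 o1) om) (size fs1) = o1.
  by rewrite nth_rcons size_rcons ltnS leqnn nth_rcons_size.
have e2 : take (size fs1).+1 (rcons (rcons fs1 o1) om) = rcons fs1 o1.
  by rewrite -(size_rcons fs1 o1) take_rcons_size.
have e3 : take (size fs1) (rcons (rcons fs1 o1) om) = fs1.
  by rewrite -cats1 takel_cat ?size_rcons // take_rcons_size.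
by rewrite e1 e2 e3 take_rcons_size last_rcons.
Qed.

Lemma omega_stepE O' E' ofs x es : lfact O' = ofs -> lfact E' = x :: es ->
  omega_step (O', E') = if ltinf (lastopt ofs) (Some x) then (O' ++ x, flatten es) else
   (if leinf (lastopt ofs) (Some (head [::] (behead (isf x (lastopt ofs))))) then
      (flatten (belast [::] ofs) ++ head [::] (isf x (lastopt ofs)) ++
         head [::] (behead (isf x (lastopt ofs))) ++ last [::] ofs,
       flatten (behead (behead (isf x (lastopt ofs)))) ++ flatten es)
    else (O' ++ head [::] (behead (isf x (lastopt ofs))) ++ head [::] (isf x (lastopt ofs)),
       flatten (behead (behead (isf x (lastopt ofs)))) ++ flatten es)).
Proof. by rewrite /omega_step => -> ->. Qed.

End Steps.

Section Main.
Variables (d : Order.disp_t) (T : finOrderType d).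
Notation word := (seq T).
Implicit Types u v w x y z p l r s a e b O E : word.
Implicit Types fs gs es ss : seq word.
Implicit Types o : option word.

Definition Inv O E :=
  [/\ all (fun l => odd (size l)) (lfact O), sorted lgt (lfact O),
      all (fun e => ~~ odd (size e)) (lfact E) &
      forall fs0 om, lfact O = rcons fs0 om ->
        all (lexle (head [::] (lfact E))) (psuffixes om) /\
        (fs0 != [::] -> E != [::] -> lexlt (head [::] (lfact E)) (last [::] fs0))].

Lemma fs_facts O fs0 om : lfact O = rcons fs0 om -> all (fun l => odd (size l)) (lfact O) ->
  sorted lgt (lfact O) ->
  [/\ O = flatten fs0 ++ om, lyndon om, all (@lyndon _ T) fs0 & odd (size om)] /\
  [/\ all (fun l => odd (size l)) fs0, sorted lgt fs0 & (fs0 != [::] -> lexlt om (last [::] fs0))].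
Proof.
move=> hf ho hs; move: (lfact_spec O); rewrite hf => /and3P[/eqP <- hl _].
move: hl ho hs; rewrite hf !all_rcons sorted_rcons => /andP[hom hl] /andP[hoo ho] /andP[hs hlt].
split; split => //; first by rewrite flatten_rcons.
by case: (fs0) hlt.
Qed.

Lemma es_facts E : [/\ E = flatten (lfact E), all (@lyndon _ T) (lfact E) & sorted lge (lfact E)].
Proof. by case/and3P: (lfact_spec E) => /eqP -> ->. Qed.

Lemma sorted_lgt_lge fs : sorted lgt fs -> sorted lge fs.
Proof. by apply: sub_sorted => x y; rewrite /lgt /lge => /lexltW. Qed.

Lemma lfact_rcons fs0 r : all (@lyndon _ T) fs0 -> lyndon r -> sorted lgt (rcons fs0 r) ->
  lfact (flatten fs0 ++ r) = rcons fs0 r.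
Proof.
move=> hl hr hs; apply: lfact_eq.
by rewrite /is_lfact flatten_rcons eqxx all_rcons hr hl (sorted_lgt_lge hs).
Qed.

Lemma lfact_cons x es : lyndon x -> all (@lyndon _ T) es -> sorted lge (x :: es) ->
  lfact (x ++ flatten es) = x :: es.
Proof. by move=> hx hl hs; apply: lfact_eq; rewrite /is_lfact /= eqxx hx hl. Qed.

Lemma sorted_lgt_rcons fs0 r om : sorted lgt fs0 -> (fs0 != [::] -> lexlt om (last [::] fs0)) ->
  lexle r om -> lexlt r om \/ fs0 = [::] -> sorted lgt (rcons fs0 r).
Proof.
move=> hs hlt hle hor; rewrite sorted_rcons hs /=.
case: fs0 hs hlt hor => [|f fs0] // hs /(_ isT) hlt hor.
rewrite /lgt; apply: lexle_lt_trans hle hlt.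
Qed.

Lemma caseS O E fs0 om : lfact O = rcons fs0 om -> Inv O E -> 1 < size om ->
  ltinf (Some (std_s om)) (lastopt fs0) -> odd (size (std_r om)) ->
  Inv (flatten fs0 ++ std_r om) (std_s om ++ E) /\ std_s om ++ E != [::] /\
  omega_step (flatten fs0 ++ std_r om, std_s om ++ E) = (O, E).
Proof.
move=> hf [ho hso he hI] hs1 hcond hr.
have [[OE hl hl0 hoo] [ho0 hs0 hlt0]] := fs_facts hf ho hso.
have [EE hle hse] := es_facts E.
have [hI4 hI5] := hI _ _ hf.
set r := std_r om in hr *; set s := std_s om in hcond *.
have hm : smallest_psuffix s om := std_minsuf hl hs1.
have sin : s \in psuffixes om by case/andP: hm.
have rl : lyndon r := std_r_lyndon hl hs1.
have sl : lyndon s := std_s_lyndon hl hs1.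
have omE : r ++ s = om := std_cat om.
have s0 := lyndon_neq0 sl.
have rom : lexlt r om by rewrite -omE lexlt_prefix.
have oms : lexlt om s := lyndonP hl sin.
have hsr : sorted lgt (rcons fs0 r).
  by apply: (sorted_lgt_rcons hs0 hlt0); [apply: lexltW|left].
have hO' : lfact (flatten fs0 ++ r) = rcons fs0 r := lfact_rcons hl0 rl hsr.
have hE' : lfact (s ++ E) = s :: lfact E.
  rewrite {1}EE; apply: lfact_cons => //=.
  case: (lfact E) hse hI4 => [|e es] //= hse hI4; rewrite hse andbT.
  exact: (allP hI4) _ sin.
have seven : ~~ odd (size s).
  by move: hoo; rewrite -omE size_cat oddD hr; case: (odd (size s)).
split; [|split].
- split.
  + by rewrite hO' all_rcons hr.
  + by rewrite hO'.
  + by rewrite hE' /= seven.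
  + move=> fs0' om'; rewrite hO' => /rcons_inj [<- <-]; rewrite hE' /=; split.
    * apply: lexle_psuf_all => hr1; exact: std_hall hl hr1.
    * by case: (fs0) hcond => [|f fs] //= hcond _ _.
- by rewrite -size_eq0 size_cat addn_eq0 negb_and size_eq0 s0.
- rewrite (omega_stepE hO' hE') lastopt_rcons /= (lexlt_trans rom oms).
  by rewrite -catA omE -OE -EE.
Qed.

Lemma all_takeW (P : pred word) t es : all P es -> all P (take t es).
Proof. by move/allP => h; apply/allP => y /mem_take /h. Qed.
Lemma all_dropW (P : pred word) t es : all P es -> all P (drop t es).
Proof. by move/allP => h; apply/allP => y /mem_drop /h. Qed.

Lemma leinf_some a b : leinf (Some a) (Some b) = lexle a b.
Proof. by rewrite /leinf /lexle /=; case: (a =P b) => [->|ne]; rewrite ?eqxx //=; case: eqP => // -[]. Qed.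

Lemma lfact_merge p E t : lyndon (p ++ flatten (take t (lfact E))) ->
  sorted lge ((p ++ flatten (take t (lfact E))) :: drop t (lfact E)) ->
  lfact (p ++ E) = (p ++ flatten (take t (lfact E))) :: drop t (lfact E).
Proof.
move=> hx hs; have [EE hle _] := es_facts E.
have -> : p ++ E = (p ++ flatten (take t (lfact E))) ++ flatten (drop t (lfact E)).
  by rewrite -catA -flatten_cat cat_take_drop -EE.
by apply: lfact_cons => //; apply: all_dropW.
Qed.

Lemma isf_chain p o r1 s1 es t : is_isf p o [:: r1; s1] -> t <= size es ->
  (forall k, k < t -> smallest_psuffix (nth [::] es k) (p ++ flatten (take k.+1 es))) ->
  all (fun e => ~~ odd (size e) && ltinf (Some e) o) (take t es) ->
  is_isf (p ++ flatten (take t es)) o (r1 :: s1 :: take t es).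
Proof.
move=> hb ht hch hall; elim: t ht hch hall => [|k IH] ht hch hall.
  by rewrite take0 cats0.
have hk : k < size es by exact: ht.
rewrite (take_nth [::] hk) flatten_rcons catA -rcons_cons.
have hall' := hall; rewrite (take_nth [::] hk) all_rcons in hall'.
case/andP: hall' => he hall'.
apply: isf_build => //.
- apply: IH => //; first exact: ltnW.
  by move=> k' hk'; apply: hch; apply: ltn_trans hk' _.
- by rewrite -catA -flatten_rcons -take_nth //; apply: hch.
Qed.

Lemma caseP O E fs0 om : lfact O = rcons fs0 om -> Inv O E -> 1 < size om ->
  ltinf (Some (std_s om)) (lastopt fs0) -> ~~ odd (size (std_r om)) ->
  Inv (flatten fs0 ++ std_s om) (std_r om ++ E) /\ std_r om ++ E != [::] /\
  omega_step (flatten fs0 ++ std_s om, std_r om ++ E) = (O, E).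
Proof.
move=> hf [ho hso he hI] hs1 hcond hr.
have [[OE hl hl0 hoo] [ho0 hs0 hlt0]] := fs_facts hf ho hso.
have [EE hle hse] := es_facts E.
have [hI4 hI5] := hI _ _ hf.
set r := std_r om in hr *; set s := std_s om in hcond *.
have hm : smallest_psuffix s om := std_minsuf hl hs1.
have sin : s \in psuffixes om by case/andP: hm.
have rl : lyndon r := std_r_lyndon hl hs1.
have sl : lyndon s := std_s_lyndon hl hs1.
have omE : r ++ s = om := std_cat om.
have r0 := lyndon_neq0 rl.
have rom : lexlt r om by rewrite -omE lexlt_prefix // (lyndon_neq0 sl).
have oms : lexlt om s := lyndonP hl sin.
have rs : lexlt r s := lexlt_trans rom oms.
have sodd : odd (size s).
  by move: hoo; rewrite -omE size_cat oddD (negbTE hr).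
have hr1 : 1 < size r.
  by case: (r) r0 hr => [|a [|b r']].
have hall_r : all (lexle s) (psuffixes r) := std_hall hl hr1.
have hes_s : lexlt (head [::] (lfact E)) s.
  case: (lfact E) he hI4 => [|e es].
    by move=> _ _; change (lexlt [::] s); rewrite lexlt_nil_l (lyndon_neq0 sl).
  case/andP=> heven _ /allP /(_ _ sin) /orP[/eqP ee|//].
  by move: ee heven => /= ->; rewrite sodd.
have hsr : sorted lgt (rcons fs0 s).
  rewrite sorted_rcons hs0 /=; by case: (fs0) hcond.
have hO' : lfact (flatten fs0 ++ s) = rcons fs0 s := lfact_rcons hl0 sl hsr.
have hch0 : all (lexle (head [::] (lfact E))) (psuffixes r).
  apply/allP => y hy; apply: lexle_trans (lexltW hes_s) _; exact: (allP hall_r).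
have [t [ht hx hsx hch]] := lyn_merge rl hle hse.
have {}hch := hch hch0.
set x := r ++ flatten (take t (lfact E)) in hx hsx hch.
have hE' : lfact (r ++ E) = x :: drop t (lfact E) := lfact_merge hx hsx.
have hxs : lexlt x s.
  apply: (merge_lt hx hse ht hch rs) => _; exact: hes_s.
have hm2 : smallest_psuffix (std_s r) r := std_minsuf rl hr1.
have hisf : is_isf x (Some s) (std_r r :: std_s r :: take t (lfact E)).
  apply: isf_chain => //.
  - rewrite -{1}(std_cat r); apply: isf_base; first by rewrite std_cat.
    rewrite leinf_some (allP hall_r) ?orbT //; by case/andP: hm2.
  - apply/allP => e /mem_take hin; rewrite /= (allP he _ hin) /=.
    by apply: lexle_lt_trans hes_s; apply: sorted_head_le.
have hxeven : ~~ odd (size x).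
  rewrite /x size_cat oddD (negbTE hr) /=; apply: even_flatten; exact: all_takeW.
split; [|split].
- split.
  + by rewrite hO' all_rcons sodd.
  + by rewrite hO'.
  + by rewrite hE' /= hxeven /=; apply: all_dropW.
  + move=> fs0' om'; rewrite hO' => /rcons_inj [<- <-]; rewrite hE' /=; split.
    * apply/allP => y hy; apply/lexltW/(lexlt_trans hxs); exact: lyndonP sl hy.
    * move=> hne _; apply: lexlt_trans hxs _.
      by case: (fs0) hne hcond.
- by rewrite -size_eq0 size_cat addn_eq0 negb_and size_eq0 r0.
- rewrite (omega_stepE hO' hE') lastopt_rcons /= (isf_eq hisf) /=.
  have -> : lexlt s x = false by apply/negP => h; apply: lexlt_asym h hxs.
  rewrite leinf_some (allP hall_r); last by case/andP: hm2.
  rewrite belast_rcons last_rcons /= -flatten_cat cat_take_drop -EE.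
  by rewrite !catA -(catA _ (std_r r)) std_cat -catA omE -OE.
Qed.

Lemma lfactE0 E : lfact E != [::] -> E != [::].
Proof. by apply: contra => /eqP ->; rewrite lfact_nil. Qed.

Lemma caseF O E fs1 (o1 om : word) : lfact O = rcons (rcons fs1 o1) om -> Inv O E ->
  ~~ ((1 < size om) && lexlt (std_s om) o1) ->
  Inv (flatten fs1) (om ++ o1 ++ E) /\ om ++ o1 ++ E != [::] /\
  omega_step (flatten fs1, om ++ o1 ++ E) = (O, E).
Proof.
move=> hf [ho hso he hI] hcond.
have [[OE hl hl0 hoo] [ho0 hs0 hlt0]] := fs_facts hf ho hso.
have [EE hle hse] := es_facts E.
have [hI4 hI5] := hI _ _ hf.
have rn : rcons fs1 o1 != [::] by case: (fs1).
move: hl0 ho0 hs0 hlt0 hI5; rewrite !all_rcons sorted_rcons last_rcons.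
move=> /andP[o1l hl1] /andP[o1odd ho1] /andP[hs1 hlt1] /(_ rn) om_o1 /(_ rn) hI5.
have hlt1' : fs1 != [::] -> lexlt o1 (last [::] fs1) by case: (fs1) hlt1.
have om0 := lyndon_neq0 hl.
have pl : lyndon (om ++ o1) := lyndon_cat hl o1l om_o1.
have hpo : all (lexle o1) (psuffixes om).
  apply: lexle_psuf_all => hs1'; move: hcond; rewrite hs1' /= -lexleNgt => h.
  apply/allP => y hy; apply: lexle_trans h _.
  by case/andP: (std_minsuf hl hs1') => _ /allP; apply.
have hm : smallest_psuffix o1 (om ++ o1) := minsuf_cat om0 o1l hpo.
have hes : lfact E != [::] -> lexlt (head [::] (lfact E)) o1.
  by move=> h; apply: hI5; apply: lfactE0.
have hch0 : all (lexle (head [::] (lfact E))) (psuffixes (om ++ o1)).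
  apply/allP => y hy; apply: lexle_trans (allP (proj2 (andP hm)) _ hy).
  case: (boolP (lfact E == [::])) => [/eqP ->|/hes /lexltW //]; exact: lexle_nil.
have [t [ht hx hsx hch]] := lyn_merge pl hle hse.
have {}hch := hch hch0.
set x := (om ++ o1) ++ flatten (take t (lfact E)) in hx hsx hch.
have hE' : lfact (om ++ o1 ++ E) = x :: drop t (lfact E) by rewrite catA; exact: lfact_merge hx hsx.
have hxo1 : lexlt x o1.
  exact: (merge_lt hx hse ht hch (lexlt_cat_lyn om0 om_o1 o1l) hes).
have hO' : lfact (flatten fs1) = fs1.
  by apply: lfact_eq; rewrite /is_lfact eqxx hl1 (sorted_lgt_lge hs1).
have hisf : is_isf x (lastopt fs1) (om :: o1 :: take t (lfact E)).
  apply: isf_chain => //.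
  - by apply: isf_base => //; rewrite o1odd.
  - apply/allP => e /mem_take hin; rewrite (allP he _ hin) /=.
    have heo : lexlt e o1.
      apply: lexle_lt_trans (hes _); first exact: sorted_head_le.
      by case: (lfact E) hin.
    by case: (fs1) hlt1' => [|f fs] //= /(_ isT); apply: lexlt_trans.
have hxeven : ~~ odd (size x).
  rewrite /x !size_cat !oddD hoo o1odd /=; apply: even_flatten; exact: all_takeW.
have hc1 : ltinf (lastopt fs1) (Some x) = false.
  case: (fs1) hlt1' => [|f fs] //= /(_ isT) h; apply/negP => h'.
  by apply: lexlt_asym h' (lexlt_trans hxo1 h).
have hc2 : leinf (lastopt fs1) (Some o1) = false.
  case: (fs1) hlt1' => [|f fs] //= /(_ isT) h.
  by rewrite leinf_some lexleNgt h.
split; [|split].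
- split.
  + by rewrite hO'.
  + by rewrite hO'.
  + by rewrite hE' /= hxeven /=; apply: all_dropW.
  + move=> fs0' om'; rewrite hO' => e1; rewrite hE' /=.
    have hom' : lexlt x om'.
      apply: lexlt_trans hxo1 _; move: hlt1'; rewrite e1; case: (fs0') => [|f fs] /(_ isT);
        by rewrite ?last_rcons.
    move: hs1 hl1; rewrite e1 sorted_rcons all_rcons => /andP[_ hlast] /andP[lom' _].
    split.
    * apply/allP => y hy; apply/lexltW/(lexlt_trans hom'); exact: lyndonP lom' hy.
    * move=> hne _; apply: lexlt_trans hom' _.
      by case: (fs0') hne hlast.
- by rewrite -size_eq0 size_cat addn_eq0 negb_and size_eq0 om0.
- rewrite (omega_stepE hO' hE') hc1 (isf_eq hisf) /= hc2.
  by rewrite -flatten_cat cat_take_drop -EE OE flatten_rcons -!catA.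
Qed.

End Main.

Section Final.
Variables (d : Order.disp_t) (T : finOrderType d).
Notation word := (seq T).
Implicit Types u v w x y z p l r s a e b O E : word.
Implicit Types fs gs es ss : seq word.

Lemma path_strict x fs : path lge x fs -> x \notin fs -> uniq fs -> path lgt x fs.
Proof.
elim: fs x => [|y fs IH] x //= /andP[hxy hp]; rewrite inE negb_or => /andP[nxy nx] /andP[ny hu].
rewrite IH // andbT /lgt; move: hxy; rewrite /lge /lexle eq_sym (negbTE nxy) //.
Qed.

Lemma Inv_init n w : Wo n w -> Inv w [::].
Proof.
case/and3P=> _ ho hu; split => //.
- case/and3P: (lfact_spec w) => _ _; case: (lfact w) hu => [|f fs] //= /andP[nf hu] hs.
  by apply: path_strict.
- by move=> fs0 om _; rewrite lfact_nil; split => //; apply/allP => y _; exact: lexle_nil.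
Qed.

Lemma Inv_step O E : Inv O E -> 1 < size O ->
  [/\ Inv (psi_step (O, E)).1 (psi_step (O, E)).2, (psi_step (O, E)).2 != [::] &
      omega_step (psi_step (O, E)) = (O, E)].
Proof.
move=> hI hO.
have O0 : O != [::] by case: (O) hO.
have := lfact_neq0 O0; case/lastP E1: (lfact O) => [|fs0 om] // _.
rewrite (psi_stepE E E1 hO).
case: ifP => [/andP[hs1 hc]|hc].
- case: ifP => hr.
  + by have [? [? ?]] := caseS E1 hI hs1 hc hr.
  + by have [? [? ?]] := caseP E1 hI hs1 hc (negbT hr).
case/lastP: fs0 E1 hc => [|fs1 o1] E1 hc.
- case: hI => ho hso _ _; have [[OE _ _ _] _] := fs_facts E1 ho hso.
  have hs : size om = size O by rewrite OE.
  by move: hc; rewrite hs hO.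
rewrite size_rcons /= take_rcons_size last_rcons.
rewrite lastopt_rcons /= in hc.
by have [? [? ?]] := caseF E1 hI (negbT hc).
Qed.

Lemma reach_inv n w (q : word * word) : Wo n w -> psi_reach w q -> Inv q.1 q.2.
Proof.
move=> hw; elim => [|[O E] _ IH hO]; first exact: Inv_init hw.
by case: (Inv_step IH hO).
Qed.

End Final.

Theorem lemma4p22 (d : Order.disp_t) (T : finOrderType d) (n : nat)
  (w : seq T) (O E : seq T) :
  Wo n w -> psi_reach w (O, E) -> 1 < size O ->
  (psi_step (O, E)).2 != [::] /\ omega_step (psi_step (O, E)) = (O, E).
Proof.
move=> hw hr hO; have hI := reach_inv hw hr.
by case: (Inv_step hI hO).
Qed.
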